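(* Let $X$ be a strictly convex curve in $\mathbb{R}^2$ satisfying Condition (C): for every point $P$ on $X$ and every chord $AB$ of $X$ parallel to the tangent line of $X$ at $P$, the area of the region bounded by $X$ and $AB$ equals $\frac43$ times the area of triangle $\triangle ABP$. Fix a point $A\in X$ and choose coordinates $(x,y)$ with $A=(0,0)$ and the $x$-axis tangent to $X$ at $A$, so that near $A$ the curve $X$ is the graph of a nonnegative strictly convex $C^3$ function $f$ defined on a neighborhood of $0$ with $f(0)=f'(0)=0$ and $f''(0)>0$. For $x\neq 0$ near $0$ let $g(x)$ be the number with $|g(x)|<|x|$ (lying between $0$ and $x$) such that $x f'(g(x))=f(x)$, i.e. the tangent of $X$ at $(g(x),f(g(x)))$ is parallel to the chord from $(0,0)$ to $(x,f(x))$; set $g(0)=0$. Then for all $x$ near $0$, $$x^3 f''(g(x))=8\{f(x)g(x)-xf(g(x))\},$$ $$x f(x)=\frac43\{f(x)g(x)-xf(g(x))\}+2\int_0^x f(t)\,dt.$$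
   Context: A curve in $\mathbb{R}^2$ is convex if it bounds a convex domain; a convex curve $X$ is strictly convex if it is connected, of class $C^{3}$, and has positive curvature with respect to the unit normal pointing to the convex side. The ''region bounded by $X$ and the chord $AB$'' is the region enclosed by the arc of $X$ between $A$ and $B$ and the segment $AB$. *)

(* Defs.v *)
From Stdlib Require Export Reals.
From Coquelicot Require Export Coquelicot.
Open Scope R_scope.

Definition C3_on (f : R -> R) (d : R) : Prop :=
  forall t, -d < t < d ->
    ex_derive f t /\ ex_derive (Derive f) t /\
    ex_derive (Derive_n f 2) t /\ continuous (Derive_n f 3) t.

Definition chord (f : R -> R) (a b t : R) : R :=
  f a + (f b - f a) / (b - a) * (t - a).

(* Area of the region bounded by the arc of the graph of the convex function f
   over [a,b] and the chord joining (a,f a) and (b,f b):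
   the region {(t,y) | a <= t <= b, f t <= y <= chord t}. *)
Definition segment_area (f : R -> R) (a b : R) : R :=
  RInt (fun t => chord f a b t - f t) a b.

Definition triangle_area (f : R -> R) (a b p : R) : R :=
  Rabs ((b - a) * (f p - f a) - (p - a) * (f b - f a)) / 2.

Definition condC_graph (f : R -> R) (d : R) : Prop :=
  forall a b p, -d < a -> a < b -> b < d -> -d < p < d ->
    Derive f p = (f b - f a) / (b - a) ->
    segment_area f a b = 4 / 3 * triangle_area f a b p.

(* Main.v *)
Require Import Defs.
From Stdlib Require Import Reals Lra Psatz IndefiniteDescription.
From Coquelicot Require Import Coquelicot.
Open Scope R_scope.

Lemma mvt (k k1 : R -> R) a b : a < b ->
  (forall y, a <= y <= b -> is_derive k y (k1 y)) ->
  exists c, a < c < b /\ k b - k a = k1 c * (b - a).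
Proof.
  intros Hab Hd. destruct (MVT_cor2 k k1 a b Hab) as [c [Hc1 Hc2]].
  - intros c Hc. apply is_derive_Reals. now apply Hd.
  - exists c. split; auto.
Qed.

Lemma strict_incr (k k1 : R -> R) a b : a < b ->
  (forall y, a <= y <= b -> is_derive k y (k1 y)) ->
  (forall y, a < y < b -> 0 < k1 y) -> k a < k b.
Proof.
  intros Hab Hd Hp. destruct (mvt k k1 a b Hab Hd) as [c [Hc E]].
  specialize (Hp c Hc). nra.
Qed.

Lemma weak_incr (k k1 : R -> R) a b : a <= b ->
  (forall y, a <= y <= b -> is_derive k y (k1 y)) ->
  (forall y, a < y < b -> 0 <= k1 y) -> k a <= k b.
Proof.
  intros Hab Hd Hp. destruct (Rle_lt_or_eq_dec _ _ Hab) as [H|H].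
  - destruct (mvt k k1 a b H Hd) as [c [Hc E]].
    specialize (Hp c Hc). nra.
  - subst; lra.
Qed.

Lemma dlin (k : R -> R) y a c : is_derive k y a -> is_derive (fun y => k y - c * y) y (a - c).
Proof. intros H. apply (is_derive_minus k (fun y => c*y)). exact H.
 auto_derive; auto; ring. Qed.
Lemma dopp (k : R -> R) y a : is_derive k y a -> is_derive (fun y => - k y) y (- a).
Proof. intros H. apply (is_derive_opp k). exact H. Qed.

Lemma convex_lb (k k1 k2 : R -> R) lo hi p t :
  lo < p < hi -> lo < t < hi ->
  (forall y, lo < y < hi -> is_derive k y (k1 y) /\ is_derive k1 y (k2 y)) ->
  (forall y, lo < y < hi -> 0 <= k2 y) ->
  k p + k1 p * (t - p) <= k t.
Proof.
  intros Hp Ht Hd H2.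
  destruct (Rtotal_order p t) as [Hpt|[Hpt|Hpt]].
  -
    assert (K1 : forall y, p <= y <= t -> k1 p <= k1 y).
    { intros y Hy. apply (weak_incr k1 k2); [lra| |].
      - intros z Hz. apply Hd. lra.
      - intros z Hz. apply H2. lra. }
    pose (m := fun y => k y - k1 p * y).
    assert (m p <= m t).
    { apply (weak_incr m (fun y => k1 y - k1 p)); [lra| |].
      - intros y Hy. unfold m. apply dlin. apply Hd. lra.
      - intros y Hy. specialize (K1 y). lra. }
    unfold m in H. lra.
  - subst. lra.
  - assert (K1 : forall y, t <= y <= p -> k1 y <= k1 p).
    { intros y Hy. apply (weak_incr k1 k2); [lra| |].
      - intros z Hz. apply Hd. lra.
      - intros z Hz. apply H2. lra. }
    pose (m := fun y => - (k y - k1 p * y)).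
    assert (m t <= m p).
    { apply (weak_incr m (fun y => - (k1 y - k1 p))); [lra| |].
      - intros y Hy. unfold m. apply (dopp (fun y => k y - k1 p * y)). apply dlin. apply Hd. lra.
      - intros y Hy. specialize (K1 y). lra. }
    unfold m in H. nra.
Qed.
Lemma alg W1 W2 h1 h2 hm w0 : 0 < hm -> hm <= h1 -> h1 < h2 -> h2 - h1 <= hm ->
  0 < W1 <= w0 -> 0 < W2 <= w0 ->
  (h2 - h1) * W1 <= 2/3 * (W2 * h2 - W1 * h1) ->
  2/3 * (W2 * h2 - W1 * h1) <= (h2 - h1) * W2 ->
  Rabs (W2^2/h2 - W1^2/h1) <= 4 * w0^2 / hm^3 * (h2 - h1)^2.
Proof.
  intros Hm Hm1 H12 Hd [HW1 HW1'] [HW2 HW2'] HA HB.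
  set (D := W2^2 * h1 - W1^2 * h2).
  assert (E : W2^2/h2 - W1^2/h1 = D / (h1 * h2)) by (unfold D; field; lra).
  assert (A : 2 * W2 * h2 >= (3*h2 - h1) * W1) by lra.
  assert (B : W2 * (3*h1 - h2) <= 2 * W1 * h1) by lra.
  assert (A2 : (2 * W2 * h2)^2 >= ((3*h2 - h1) * W1)^2).
  { assert (0 <= (3*h2 - h1) * W1) by nra. nra. }
  assert (B2 : (W2 * (3*h1 - h2))^2 <= (2 * W1 * h1)^2).
  { assert (0 <= W2 * (3*h1 - h2)) by nra. nra. }
  assert (L : 4 * h2^2 * D >= - W1^2 * (h2-h1)^2 * (4*h2 - h1)).
  { unfold D. 
    replace (- W1^2 * (h2-h1)^2 * (4*h2 - h1)) with
      (((3*h2 - h1) * W1)^2 * h1 - 4 * h2^3 * W1^2) by ring.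
    replace (4 * h2^2 * (W2^2 * h1 - W1^2 * h2)) with
      ((2 * W2 * h2)^2 * h1 - 4 * h2^3 * W1^2) by ring.
    nra. }
  assert (U : (3*h1 - h2)^2 * D <= W1^2 * (h2-h1)^2 * (4*h1 - h2)).
  { unfold D.
    replace (W1^2 * (h2-h1)^2 * (4*h1 - h2)) with
      ((2 * W1 * h1)^2 * h1 - (3*h1 - h2)^2 * h2 * W1^2) by ring.
    replace ((3*h1 - h2)^2 * (W2^2 * h1 - W1^2 * h2)) with
      ((W2 * (3*h1 - h2))^2 * h1 - (3*h1 - h2)^2 * h2 * W1^2) by ring.
    nra. }
  set (De := h2 - h1) in *.
  assert (Hw : W1^2 <= w0^2) by nra.
  assert (L2 : D >= - w0^2 * De^2 / h1).
  { assert (D * (4 * h2^2) >= - W1^2 * De^2 * 4 * h2) by nra.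
    assert (D >= - W1^2 * De^2 / h2).
    { apply Rle_ge. apply (Rmult_le_reg_r (4 * h2^2)). nra.
      replace (- W1 ^ 2 * De ^ 2 / h2 * (4 * h2 ^ 2)) with (- W1^2 * De^2 * 4 * h2) by (field; lra).
      lra. }
    assert (W1^2 * De^2 / h2 <= w0^2 * De^2 / h1).
    { unfold Rdiv. apply Rmult_le_compat. nra. left; apply Rinv_0_lt_compat; lra.
      apply Rmult_le_compat_r. nra. lra. apply Rinv_le_contravar; lra. }
    lra. }
  assert (U2 : D <= 4 * w0^2 * De^2 / h1).
  { assert (h1 <= 3*h1 - h2) by (unfold De in *; lra).
    assert (D * (3*h1-h2)^2 <= W1^2 * De^2 * (4*h1)) by nra.
    apply (Rmult_le_reg_r ((3*h1-h2)^2)). nra.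
    apply Rle_trans with (W1^2 * De^2 * (4*h1)). lra.
    replace (4 * w0 ^ 2 * De ^ 2 / h1 * (3 * h1 - h2) ^ 2) with
      (4 * w0 ^ 2 * De ^ 2 * ((3 * h1 - h2) ^ 2 / h1)) by (field; lra).
    assert (h1 <= (3 * h1 - h2) ^ 2 / h1).
    { apply (Rmult_le_reg_r h1). lra. replace ((3 * h1 - h2) ^ 2 / h1 * h1) with ((3 * h1 - h2) ^ 2) by (field; lra). nra. }
    assert (0 <= De^2) by nra.
    apply Rle_trans with (4 * w0^2 * De^2 * h1).
    { replace (W1 ^ 2 * De ^ 2 * (4 * h1)) with (W1^2 * (De^2 * 4 * h1)) by ring.
      replace (4 * w0 ^ 2 * De ^ 2 * h1) with (w0^2 * (De^2 * 4 * h1)) by ring.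
      apply Rmult_le_compat_r. nra. lra. }
    apply Rmult_le_compat_l. nra. lra. }
  rewrite E. unfold Rdiv at 1. rewrite Rabs_mult.
  rewrite Rabs_inv. rewrite (Rabs_right (h1*h2)) by nra.
  assert (AD : Rabs D <= 4 * w0^2 * De^2 / h1).
  { apply Rabs_le. split; [|lra]. assert (0 <= w0^2 * De^2 / h1).
    { unfold Rdiv. apply Rmult_le_pos. nra. left; apply Rinv_0_lt_compat; lra. }
    lra. }
  apply Rle_trans with (4 * w0^2 * De^2 / h1 * / (h1 * h2)).
  { apply Rmult_le_compat_r. left; apply Rinv_0_lt_compat; nra. exact AD. }
  replace (4 * w0^2 * De^2 / h1 * / (h1 * h2)) with (4 * w0^2 * De^2 * / (h1 * h1 * h2)) by (field; lra).
  replace (4 * w0 ^ 2 / hm ^ 3 * De ^ 2) with (4 * w0^2 * De^2 * / (hm^3)) by (field; lra).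
  apply Rmult_le_compat_l. nra.
  apply Rinv_le_contravar. apply pow_lt; lra.
  assert (hm * hm <= h1 * h1) by nra. 
  replace (hm^3) with (hm*hm*hm) by ring. apply Rmult_le_compat; nra.
Qed.
Lemma tele (F : R -> R) lo hi C eta : lo < hi -> 0 < eta -> 0 <= C ->
  (forall x y, lo <= x -> x < y -> y <= hi -> y - x <= eta ->
     Rabs (F y - F x) <= C * (y - x)^2) -> F hi = F lo.
Proof.
  intros Hlh Heta HC HF.
  assert (Key : forall n : nat, (0 < n)%nat -> (hi - lo) / INR n <= eta ->
            Rabs (F hi - F lo) <= C * (hi - lo)^2 / INR n).
  { intros n Hn Hs. set (de := (hi - lo) / INR n).
    assert (Hn' : 0 < INR n) by (apply lt_0_INR; lia).
    assert (Hde : 0 < de) by (unfold de; apply Rdiv_lt_0_compat; lra).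
    assert (Hnde : INR n * de = hi - lo) by (unfold de; field; lra).
    assert (P : forall k, (k <= n)%nat ->
       Rabs (F (lo + INR k * de) - F lo) <= INR k * (C * de^2)).
    { induction k as [|k IH]; intros Hk.
      - simpl. replace (lo + 0 * de) with lo by ring. unfold Rminus. rewrite Rplus_opp_r, Rabs_R0. lra.
      - assert (Hkn : INR k + 1 <= INR n) by (rewrite <- S_INR; apply le_INR; lia).
        assert (H0k : 0 <= INR k) by apply pos_INR.
        specialize (IH ltac:(lia)).
        rewrite S_INR.
        assert (Hs2 : Rabs (F (lo + (INR k + 1) * de) - F (lo + INR k * de)) <= C * de^2).
        { replace (C * de^2) with (C * ((lo + (INR k + 1) * de) - (lo + INR k * de))^2) by (f_equal; f_equal; ring).
          apply HF.
          - nra.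
          - nra.
          - assert ((INR k+1)*de <= INR n * de) by nra. lra.
          - replace (lo + (INR k + 1) * de - (lo + INR k * de)) with de by ring. exact Hs. }
        replace (F (lo + (INR k + 1) * de) - F lo) with
          ((F (lo + (INR k + 1) * de) - F (lo + INR k * de)) + (F (lo + INR k * de) - F lo)) by ring.
        eapply Rle_trans. apply Rabs_triang. lra. }
    specialize (P n (Nat.le_refl n)). rewrite Hnde in P.
    replace (lo + (hi - lo)) with hi in P by ring.
    replace (C * (hi - lo)^2 / INR n) with (INR n * (C * de^2)). exact P.
    unfold de. field. lra. }
  destruct (Req_dec (F hi) (F lo)) as [E|NE]; auto.
  exfalso. set (e := Rabs (F hi - F lo)).
  assert (He : 0 < e) by (unfold e; apply Rabs_pos_lt; lra).
  set (K := C * (hi - lo)^2 + 1).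
  assert (HK : 0 < K) by (unfold K; assert (0 <= C * (hi - lo)^2) by (apply Rmult_le_pos; [lra|apply pow2_ge_0]); lra).
  destruct (archimed_cor1 (Rmin (e / K) (eta / (hi - lo)))) as [N [HN1 HN2]].
  { apply Rmin_pos; apply Rdiv_lt_0_compat; lra. }
  assert (HNp : 0 < INR N) by (apply lt_0_INR; lia).
  assert (H1 : / INR N < e / K) by (eapply Rlt_le_trans; [exact HN1| apply Rmin_l]).
  assert (H2 : / INR N < eta / (hi - lo)) by (eapply Rlt_le_trans; [exact HN1| apply Rmin_r]).
  specialize (Key N HN2).
  assert ((hi - lo) / INR N <= eta).
  { unfold Rdiv. apply Rmult_lt_compat_l with (r := hi - lo) in H2; [|lra].
    replace ((hi - lo) * (eta / (hi - lo))) with eta in H2 by (field; lra). lra. }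
  specialize (Key H). fold e in Key.
  assert (C * (hi - lo)^2 / INR N < e).
  { unfold Rdiv. apply Rle_lt_trans with (K * / INR N).
    - apply Rmult_le_compat_r. left; apply Rinv_0_lt_compat; lra. unfold K; lra.
    - apply Rmult_lt_compat_l with (r := K) in H1; [|lra].
      replace (K * (e / K)) with e in H1 by (field; lra). lra. }
  lra.
Qed.
Section F.
Variables (f f1 f2 : R -> R) (d : R).
Hypothesis Hder : forall y, -d < y < d ->
  is_derive f y (f1 y) /\ is_derive f1 y (f2 y) /\ continuous f2 y.
Hypothesis Hpos : forall y, -d < y < d -> 0 < f2 y.

Definition psi p t := f t - f p - f1 p * (t - p).

Lemma f1_incr u v : -d < u -> u < v -> v < d -> f1 u < f1 v.
Proof.
  intros. apply (strict_incr f1 f2); auto.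
  - intros y Hy. apply Hder. lra.
  - intros y Hy. apply Hpos. lra.
Qed.

Lemma psi_der p y : -d < y < d -> is_derive (psi p) y (f1 y - f1 p).
Proof.
  intros Hy. unfold psi.
  apply (is_derive_ext (fun t => (f t - f1 p * t) + (f1 p * p - f p))).
  { intros t. simpl. ring. }
  replace (f1 y - f1 p) with ((f1 y - f1 p) + 0) by ring.
  apply (is_derive_plus (fun t => f t - f1 p * t) (fun _ => f1 p * p - f p)).
  - apply dlin. apply Hder. auto.
  - auto_derive; auto; try field.
Qed.

Lemma psi_pp p : psi p p = 0.
Proof. unfold psi. ring. Qed.

Lemma psi_incr p u v : -d < p -> p <= u -> u < v -> v < d -> psi p u < psi p v.
Proof.
  intros. apply (strict_incr (psi p) (fun y => f1 y - f1 p)); auto.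
  - intros y Hy. apply psi_der. lra.
  - intros y Hy. assert (f1 p < f1 y) by (apply f1_incr; lra). lra.
Qed.

Lemma psi_decr p u v : -d < u -> u < v -> v <= p -> p < d -> psi p v < psi p u.
Proof.
  intros. cut (- psi p u < - psi p v). lra.
  apply (strict_incr (fun t => - psi p t) (fun y => - (f1 y - f1 p))); auto.
  - intros y Hy. apply dopp. apply psi_der. lra.
  - intros y Hy. assert (f1 y < f1 p) by (apply f1_incr; lra). lra.
Qed.

Lemma psi_pos p t : -d < p < d -> -d < t < d -> t <> p -> 0 < psi p t.
Proof.
  intros Hp Ht Htp. rewrite <- (psi_pp p).
  destruct (Rtotal_order t p) as [H|[H|H]].
  - apply psi_decr; lra.
  - lra.
  - apply psi_incr; lra.
Qed.

Lemma psi_cont p y : -d < y < d -> continuous (psi p) y.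
Proof.
  intros Hy. apply (ex_derive_continuous (psi p)). eexists. apply psi_der. auto.
Qed.

Lemma taylor_lo p m lo hi t : -d <= lo -> lo < p < hi -> hi <= d -> lo < t < hi ->
  (forall y, lo < y < hi -> m <= f2 y) -> m * (t - p) ^ 2 / 2 <= psi p t.
Proof.
  intros Hlo Hp Hhi Ht Hm.
  pose (k := fun t => psi p t - m * (t - p) ^ 2 / 2).
  assert (k p + (fun y => f1 y - f1 p - m * (y - p)) p * (t - p) <= k t).
  { apply (convex_lb k (fun y => f1 y - f1 p - m * (y - p)) (fun y => f2 y - m) lo hi p t); auto.
    - intros y Hy. split.
      + unfold k. apply (is_derive_minus (psi p) (fun t => m * (t - p) ^ 2 / 2)).
        * apply psi_der. lra.
        * auto_derive; auto; try field.
      + apply (is_derive_minus (fun y => f1 y - f1 p) (fun y => m * (y - p))).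
        * replace (f2 y) with (f2 y - 0) by ring.
          apply (is_derive_minus f1 (fun _ => f1 p)). apply Hder; lra. auto_derive; auto; try field.
        * auto_derive; auto; try field.
    - intros y Hy. specialize (Hm y Hy). lra. }
  unfold k in H. rewrite psi_pp in H. lra.
Qed.

Lemma taylor_hi p M lo hi t : -d <= lo -> lo < p < hi -> hi <= d -> lo < t < hi ->
  (forall y, lo < y < hi -> f2 y <= M) -> psi p t <= M * (t - p) ^ 2 / 2.
Proof.
  intros Hlo Hp Hhi Ht Hm.
  pose (k := fun t => M * (t - p) ^ 2 / 2 - psi p t).
  assert (k p + (fun y => M * (y - p) - (f1 y - f1 p)) p * (t - p) <= k t).
  { apply (convex_lb k (fun y => M * (y - p) - (f1 y - f1 p)) (fun y => M - f2 y) lo hi p t); auto.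
    - intros y Hy. split.
      + unfold k. apply (is_derive_minus (fun t => M * (t - p) ^ 2 / 2) (psi p)).
        * auto_derive; auto; try field.
        * apply psi_der. lra.
      + apply (is_derive_minus (fun y => M * (y - p)) (fun y => f1 y - f1 p)).
        * auto_derive; auto; try field.
        * replace (f2 y) with (f2 y - 0) by ring.
          apply (is_derive_minus f1 (fun _ => f1 p)). apply Hder; lra. auto_derive; auto; try field.
    - intros y Hy. specialize (Hm y Hy). lra. }
  unfold k in H. rewrite psi_pp in H. lra.
Qed.
Hypothesis HC : forall a b p, -d < a -> a < b -> b < d -> -d < p < d ->
  f1 p = (f b - f a) / (b - a) ->
  segment_area f a b = 4 / 3 * triangle_area f a b p.

Lemma psi_cpt p h y : -d < y < d -> continuity_pt (fun t => psi p t - h) y.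
Proof.
  intros Hy. apply continuity_pt_filterlim.
  exact (continuous_minus (psi p) (fun _ => h) y (psi_cont p y Hy) (continuous_const h y)).
Qed.

Lemma psi_cpt' p h y : -d < y < d -> continuity_pt (fun t => h - psi p t) y.
Proof.
  intros Hy. apply continuity_pt_filterlim.
  exact (continuous_minus (fun _ => h) (psi p) y (continuous_const h y) (psi_cont p y Hy)).
Qed.

Lemma exr p h u v : -d < u -> u <= v -> v < d -> ex_RInt (fun t => h - psi p t) u v.
Proof.
  intros. apply (ex_RInt_continuous (V:=R_CompleteNormedModule)). intros z Hz.
  rewrite Rmin_left in Hz by lra. rewrite Rmax_right in Hz by lra.
  apply (continuous_minus (fun _ => h) (psi p) z (continuous_const h z)).
  apply psi_cont. lra.
Qed.

Lemma left_pt p a0 h : -d < a0 -> a0 < p -> p < d -> 0 < h -> h <= psi p a0 ->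
  exists a, a0 <= a < p /\ psi p a = h.
Proof.
  intros H1 H2 H3 H4 H5. destruct (Rle_lt_or_eq_dec _ _ H5) as [H|H].
  - destruct (Ranalysis5.IVT_interv (fun t => h - psi p t) a0 p) as [z [Hz Ez]].
    + intros y Hy. apply psi_cpt'. lra.
    + lra.
    + lra.
    + rewrite psi_pp. lra.
    + exists z. destruct (Req_dec z p) as [->|Hzp].
      * rewrite psi_pp in Ez. lra.
      * split; lra.
  - exists a0. split; lra.
Qed.

Lemma right_pt p b0 h : -d < p -> p < b0 -> b0 < d -> 0 < h -> h <= psi p b0 ->
  exists b, p < b <= b0 /\ psi p b = h.
Proof.
  intros H1 H2 H3 H4 H5. destruct (Rle_lt_or_eq_dec _ _ H5) as [H|H].
  - destruct (Ranalysis5.IVT_interv (fun t => psi p t - h) p b0) as [z [Hz Ez]].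
    + intros y Hy. apply psi_cpt. lra.
    + lra.
    + rewrite psi_pp. lra.
    + lra.
    + exists z. destruct (Req_dec z p) as [->|Hzp].
      * rewrite psi_pp in Ez. lra.
      * split; lra.
  - exists b0. split; lra.
Qed.

Lemma left_uniq p a a' : -d < a -> -d < a' -> a <= p -> a' <= p -> p < d ->
  psi p a = psi p a' -> a = a'.
Proof.
  intros. destruct (Rtotal_order a a') as [H'|[H'|H']]; auto.
  - assert (psi p a' < psi p a) by (apply psi_decr; lra). lra.
  - assert (psi p a < psi p a') by (apply psi_decr; lra). lra.
Qed.

Lemma right_uniq p b b' : -d < p -> p <= b -> p <= b' -> b < d -> b' < d ->
  psi p b = psi p b' -> b = b'.
Proof.
  intros. destruct (Rtotal_order b b') as [H'|[H'|H']]; auto.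
  - assert (psi p b < psi p b') by (apply psi_incr; lra). lra.
  - assert (psi p b' < psi p b) by (apply psi_incr; lra). lra.
Qed.

Lemma seg_rel p a b h : -d < a -> a < p -> p < b -> b < d ->
  psi p a = h -> psi p b = h ->
  RInt (fun t => h - psi p t) a b = 2/3 * (b - a) * h.
Proof.
  intros Ha Hap Hpb Hb Ea Eb.
  assert (hpos : 0 < h) by (rewrite <- Ea; apply psi_pos; lra).
  unfold psi in Ea, Eb.
  assert (Fa : f a = h + f p + f1 p * (a - p)) by lra.
  assert (Fb : f b = h + f p + f1 p * (b - p)) by lra.
  assert (Sl : f1 p = (f b - f a) / (b - a)) by (rewrite Fa, Fb; field; lra).
  specialize (HC a b p Ha (Rlt_trans _ _ _ Hap Hpb) Hb ltac:(lra) Sl).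
  unfold segment_area, triangle_area in HC.
  assert (RE : RInt (fun t => chord f a b t - f t) a b = RInt (fun t => h - psi p t) a b).
  { apply (RInt_ext (V:=R_CompleteNormedModule)). intros x _. unfold chord, psi. rewrite <- Sl. rewrite Fa. simpl. ring. }
  rewrite <- RE, HC.
  replace ((b - a) * (f p - f a) - (p - a) * (f b - f a)) with (- ((b - a) * h))
    by (rewrite Fa, Fb; ring).
  rewrite Rabs_Ropp. rewrite Rabs_right by nra. simpl. field.
Qed.
Lemma rint_const_R (c a b : R) : RInt (fun _ => c) a b = c * (b - a).
Proof. rewrite RInt_const. simpl. unfold scal; simpl. unfold mult; simpl. ring. Qed.

Lemma rint_bound p h u v lo hi : -d < u -> u <= v -> v < d ->
  (forall t, u < t < v -> lo <= h - psi p t <= hi) ->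
  lo * (v - u) <= RInt (fun t => h - psi p t) u v <= hi * (v - u).
Proof.
  intros Hu Huv Hv Hb. split.
  - rewrite <- rint_const_R. apply RInt_le; auto.
    + apply ex_RInt_const.
    + apply exr; lra.
    + intros t Ht. apply Hb; auto.
  - rewrite <- rint_const_R. apply RInt_le; auto.
    + apply exr; lra.
    + apply ex_RInt_const.
    + intros t Ht. apply Hb; auto.
Qed.

Lemma rint_split p h a b c : -d < a -> a <= b -> b <= c -> c < d ->
  RInt (fun t => h - psi p t) a c = RInt (fun t => h - psi p t) a b + RInt (fun t => h - psi p t) b c.
Proof.
  intros. rewrite <- (RInt_Chasles (fun t => h - psi p t) a b c).
  - reflexivity.
  - apply exr; lra.
  - apply exr; lra.
Qed.

Lemma rint_diff p h1 h2 a b : -d < a -> a <= b -> b < d ->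
  RInt (fun t => h2 - psi p t) a b = RInt (fun t => h1 - psi p t) a b + (h2 - h1) * (b - a).
Proof.
  intros. rewrite <- rint_const_R.
  rewrite <- (RInt_plus (fun t => h1 - psi p t) (fun _ => h2 - h1)).
  - apply (RInt_ext (V:=R_CompleteNormedModule)). intros x _. simpl. unfold plus; simpl. ring.
  - apply exr; lra.
  - apply ex_RInt_const.
Qed.
Lemma cont_eps (g : R -> R) x : continuous g x ->
  forall e, 0 < e -> exists de, 0 < de /\ forall y, Rabs (y - x) < de -> Rabs (g y - g x) < e.
Proof.
  intros Hc e He.
  destruct (proj1 (filterlim_locally g (g x)) Hc (mkposreal e He)) as [de Hde].
  exists de. split. apply cond_pos. intros y Hy. apply (Hde y). exact Hy.
Qed.

Lemma parabola p a0 b0 h0 : -d < a0 -> a0 < p -> p < b0 -> b0 < d ->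
  psi p a0 = h0 -> psi p b0 = h0 -> (b0 - a0)^2 * f2 p = 8 * h0.
Proof.
  intros Ha0 Hap Hpb Hb0 Ea0 Eb0.
  assert (h0pos : 0 < h0) by (rewrite <- Ea0; apply psi_pos; lra).
  assert (Hex : forall h, exists ab : R * R, 0 < h <= h0 ->
     (a0 <= fst ab < p /\ psi p (fst ab) = h) /\ (p < snd ab <= b0 /\ psi p (snd ab) = h)).
  { intros h. destruct (Rlt_le_dec 0 h) as [H1|H1].
    - destruct (Rle_lt_dec h h0) as [H2|H2].
      + destruct (left_pt p a0 h) as [a Ha]; try lra.
        destruct (right_pt p b0 h) as [b Hb]; try lra.
        exists (a, b). intros _. simpl. tauto.
      + exists (0, 0). intros; lra.
    - exists (0, 0). intros; lra. }
  set (AB := fun h => proj1_sig (constructive_indefinite_description _ (Hex h))).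
  assert (HAB : forall h, 0 < h <= h0 ->
     (a0 <= fst (AB h) < p /\ psi p (fst (AB h)) = h) /\ (p < snd (AB h) <= b0 /\ psi p (snd (AB h)) = h)).
  { intros h Hh. exact (proj2_sig (constructive_indefinite_description _ (Hex h)) Hh). }
  set (W := fun h => snd (AB h) - fst (AB h)).
  assert (W0 : W h0 = b0 - a0).
  { destruct (HAB h0) as [[Ha Ea] [Hb Eb]]; [lra|].
    unfold W. f_equal.
    - apply (right_uniq p); lra.
    - apply (left_uniq p); lra. }
  assert (Wb : forall h, 0 < h <= h0 -> 0 < W h <= b0 - a0).
  { intros h Hh. destruct (HAB h Hh) as [[Ha Ea] [Hb Eb]]. unfold W. lra. }
  assert (Irel : forall h, 0 < h <= h0 ->
     RInt (fun t => h - psi p t) (fst (AB h)) (snd (AB h)) = 2/3 * W h * h).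
  { intros h Hh. destruct (HAB h Hh) as [[Ha Ea] [Hb Eb]]. unfold W.
    rewrite seg_rel with (h := h); auto; lra. }
  assert (Idiff : forall h1 h2, 0 < h1 -> h1 < h2 -> h2 <= h0 ->
     (h2 - h1) * W h1 <= 2/3 * (W h2 * h2 - W h1 * h1) <= (h2 - h1) * W h2).
  { intros h1 h2 H1 H12 H2.
    destruct (HAB h1) as [[Ha1 Ea1] [Hb1 Eb1]]; [lra|].
    destruct (HAB h2) as [[Ha2 Ea2] [Hb2 Eb2]]; [lra|].
    pose proof (Irel h1 ltac:(lra)) as I1. pose proof (Irel h2 ltac:(lra)) as I2.
    unfold W in *.
    set (a1 := fst (AB h1)) in *. set (b1 := snd (AB h1)) in *.
    set (a2 := fst (AB h2)) in *. set (b2 := snd (AB h2)) in *.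
    assert (Ha12 : a2 < a1).
    { destruct (Rlt_le_dec a2 a1) as [X|X]; auto. exfalso.
      destruct (Rle_lt_or_eq_dec _ _ X) as [Y|Y].
      - assert (psi p a2 < psi p a1) by (apply psi_decr; lra). lra.
      - rewrite Y in Ea1. lra. }
    assert (Hb12 : b1 < b2).
    { destruct (Rlt_le_dec b1 b2) as [X|X]; auto. exfalso.
      destruct (Rle_lt_or_eq_dec _ _ X) as [Y|Y].
      - assert (psi p b2 < psi p b1) by (apply psi_incr; lra). lra.
      - rewrite <- Y in Eb1. lra. }
    rewrite (rint_split p h2 a2 a1 b2) in I2 by lra.
    rewrite (rint_split p h2 a1 b1 b2) in I2 by lra.
    rewrite (rint_diff p h1 h2 a1 b1) in I2 by lra.
    assert (L : 0 * (a1 - a2) <= RInt (fun t => h2 - psi p t) a2 a1 <= (h2 - h1) * (a1 - a2)).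
    { apply rint_bound; try lra. intros t Ht.
      assert (psi p t < psi p a2) by (apply psi_decr; lra).
      assert (psi p a1 < psi p t) by (apply psi_decr; lra). lra. }
    assert (R : 0 * (b2 - b1) <= RInt (fun t => h2 - psi p t) b1 b2 <= (h2 - h1) * (b2 - b1)).
    { apply rint_bound; try lra. intros t Ht.
      assert (psi p b1 < psi p t) by (apply psi_incr; lra).
      assert (psi p t < psi p b2) by (apply psi_incr; lra). lra. }
    nra. }
  set (Q0 := (b0 - a0)^2 / h0).
  assert (Qc : forall h, 0 < h <= h0 -> W h ^ 2 / h = Q0).
  { intros h Hh. destruct (Rle_lt_or_eq_dec _ _ (proj2 Hh)) as [Hlt|Heq].
    - assert (T := tele (fun h => W h ^ 2 / h) h h0 (4 * (b0 - a0)^2 / h^3) h Hlt (proj1 Hh)).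
      unfold Q0. rewrite <- W0. symmetry. apply T.
      + unfold Rdiv. apply Rmult_le_pos. nra. left. apply Rinv_0_lt_compat. apply pow_lt; lra.
      + intros x y Hx Hxy Hy Hyx.
        destruct (Idiff x y) as [I1 I2]; try lra.
        apply (alg (W x) (W y) x y h (b0 - a0)); try lra.
        * apply Wb; lra.
        * apply Wb; lra.
    - subst h. unfold Q0. rewrite W0. reflexivity. }
  set (c := f2 p).
  assert (cpos : 0 < c) by (apply Hpos; lra).
  assert (Q0pos : 0 < Q0) by (unfold Q0; apply Rdiv_lt_0_compat; nra).
  assert (Bnd : forall e, 0 < e < c -> (c - e) * Q0 <= 8 /\ 8 <= (c + e) * Q0).
  { intros e He.
    destruct (cont_eps f2 p (proj2 (proj2 (Hder p ltac:(lra)))) e (proj1 He)) as [de [Hde Hc]].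
    set (d1 := Rmin de (Rmin (p - a0) (b0 - p))).
    assert (Hd1 : 0 < d1) by (unfold d1; repeat apply Rmin_pos; lra).
    assert (Hd1a : d1 <= de) by apply Rmin_l.
    assert (Hd1b : d1 <= p - a0) by (unfold d1; eapply Rle_trans; [apply Rmin_r|apply Rmin_l]).
    assert (Hd1c : d1 <= b0 - p) by (unfold d1; eapply Rle_trans; [apply Rmin_r|apply Rmin_r]).
    assert (F2 : forall y, p - d1 < y < p + d1 -> c - e <= f2 y <= c + e).
    { intros y Hy. assert (Rabs (y - p) < de) by (apply Rabs_def1; lra).
      specialize (Hc y H). apply Rabs_def2 in Hc. unfold c. lra. }
    assert (TL : forall t, p - d1 < t < p + d1 -> (c - e) * (t - p)^2 / 2 <= psi p t).
    { intros t Ht. apply (taylor_lo p (c - e) (p - d1) (p + d1) t); try lra.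
      intros y Hy. apply F2; auto. }
    assert (TH : forall t, p - d1 < t < p + d1 -> psi p t <= (c + e) * (t - p)^2 / 2).
    { intros t Ht. apply (taylor_hi p (c + e) (p - d1) (p + d1) t); try lra.
      intros y Hy. apply F2; auto. }
    set (ee := d1 / 2).
    set (h := Rmin h0 ((c - e) * ee^2 / 4)).
    assert (Hh1 : 0 < h) by (unfold h; apply Rmin_pos; [lra| unfold ee; apply Rdiv_lt_0_compat; [apply Rmult_lt_0_compat; [lra| apply pow_lt; lra] | lra]]).
    assert (Hh2 : h <= h0) by apply Rmin_l.
    assert (Hh3 : h <= (c - e) * ee^2 / 4) by apply Rmin_r.
    destruct (HAB h ltac:(lra)) as [[Ha Ea] [Hb Eb]].
    set (a := fst (AB h)) in *. set (b := snd (AB h)) in *.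
    assert (Hq : (b - a)^2 = Q0 * h).
    { rewrite <- (Qc h ltac:(lra)). unfold W. fold a b. field. lra. }
    assert (Hee : (c - e) * ee^2 / 4 < (c - e) * ee^2 / 2).
    { assert (0 < (c - e) * ee^2) by (apply Rmult_lt_0_compat; [lra| apply pow_lt; unfold ee; lra]). lra. }
    assert (Bb : b < p + ee).
    { destruct (Rlt_le_dec b (p + ee)) as [X|X]; auto. exfalso.
      assert (psi p (p + ee) <= psi p b).
      { destruct (Rle_lt_or_eq_dec _ _ X) as [Y|Y].
        - left. apply psi_incr; unfold ee in *; lra.
        - rewrite Y. lra. }
      assert (TT := TL (p + ee) ltac:(unfold ee; lra)).
      replace (p + ee - p) with ee in TT by ring. lra. }
    assert (Ba : p - ee < a).
    { destruct (Rlt_le_dec (p - ee) a) as [X|X]; auto. exfalso.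
      assert (psi p (p - ee) <= psi p a).
      { destruct (Rle_lt_or_eq_dec _ _ X) as [Y|Y].
        - left. apply psi_decr; unfold ee in *; lra.
        - rewrite <- Y. lra. }
      assert (TT := TL (p - ee) ltac:(unfold ee; lra)).
      replace (p - ee - p) with (- ee) in TT by ring. 
      replace ((- ee)^2) with (ee^2) in TT by ring. lra. }
    assert (Hb1 := TL b ltac:(unfold ee in *; lra)).
    assert (Hb2 := TH b ltac:(unfold ee in *; lra)).
    assert (Ha1 := TL a ltac:(unfold ee in *; lra)).
    assert (Ha2 := TH a ltac:(unfold ee in *; lra)).
    rewrite Eb in Hb1, Hb2. rewrite Ea in Ha1, Ha2.
    set (u := b - p) in *. set (v := p - a) in *.
    replace ((a - p)^2) with (v^2) in Ha1, Ha2 by (unfold v; ring).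
    replace (b - a) with (u + v) in Hq by (unfold u, v; ring).
    assert (u > 0) by (unfold u; lra). assert (v > 0) by (unfold v; lra).
    split.
    - assert ((c - e) * (u + v)^2 <= 8 * h).
      { assert ((u + v)^2 <= 2 * (u^2 + v^2)).
        { assert (Z: (u+v)^2 = 2*(u^2+v^2) - (u-v)^2) by ring. assert (0 <= (u-v)^2) by apply pow2_ge_0. lra. }

        assert ((c - e) * (u + v)^2 <= (c - e) * (2 * (u^2 + v^2))) by (apply Rmult_le_compat_l; lra).
        lra. }
      rewrite Hq in H1. 
      apply (Rmult_le_reg_r h). lra. lra.
    - assert (8 * h <= (c + e) * (u + v)^2).
      { assert (X : ((c + e) * u * v)^2 >= (2 * h)^2).
        { replace (((c + e) * u * v)^2) with (((c + e) * u^2) * ((c + e) * v^2)) by ring.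
          assert (2 * h <= (c + e) * u^2) by lra. assert (2 * h <= (c + e) * v^2) by lra.
          assert (0 <= 2 * h) by lra.
          replace ((2 * h)^2) with ((2 * h) * (2 * h)) by ring.
          apply Rle_ge. apply Rmult_le_compat; lra. }
        assert (Y : 2 * h <= (c + e) * u * v).
        { assert (0 <= (c + e) * u * v).
          { apply Rmult_le_pos; [apply Rmult_le_pos|]; lra. }
          nra. }
        replace ((c + e) * (u + v)^2) with ((c + e) * u^2 + (c + e) * v^2 + 2 * ((c + e) * u * v)) by ring.
        lra. }
      rewrite Hq in H1.
      apply (Rmult_le_reg_r h). lra. lra. }
  assert (cQ : c * Q0 = 8).
  { destruct (Rtotal_order (c * Q0) 8) as [X|[X|X]]; auto; exfalso.
    - set (e := Rmin (c / 2) ((8 - c * Q0) / (2 * Q0))).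
      assert (He : 0 < e) by (unfold e; apply Rmin_pos; apply Rdiv_lt_0_compat; lra).
      assert (He1 : e <= c / 2) by apply Rmin_l.
      assert (He2 : e <= (8 - c * Q0) / (2 * Q0)) by apply Rmin_r.
      destruct (Bnd e ltac:(lra)) as [_ B].
      assert (e * Q0 <= (8 - c * Q0) / 2).
      { apply Rmult_le_compat_r with (r := Q0) in He2; [|lra].
        replace ((8 - c * Q0) / (2 * Q0) * Q0) with ((8 - c * Q0) / 2) in He2 by (field; lra). lra. }
      lra.
    - set (e := Rmin (c / 2) ((c * Q0 - 8) / (2 * Q0))).
      assert (He : 0 < e) by (unfold e; apply Rmin_pos; apply Rdiv_lt_0_compat; lra).
      assert (He1 : e <= c / 2) by apply Rmin_l.
      assert (He2 : e <= (c * Q0 - 8) / (2 * Q0)) by apply Rmin_r.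
      destruct (Bnd e ltac:(lra)) as [B _].
      assert (e * Q0 <= (c * Q0 - 8) / 2).
      { apply Rmult_le_compat_r with (r := Q0) in He2; [|lra].
        replace ((c * Q0 - 8) / (2 * Q0) * Q0) with ((c * Q0 - 8) / 2) in He2 by (field; lra). lra. }
      assert ((c - e) * Q0 > 8).
      { assert (Z : (c - e) * Q0 = c * Q0 - e * Q0) by ring. rewrite Z.
        destruct (Rle_lt_or_eq_dec _ _ He1); lra. }
      lra. }
  unfold Q0 in cQ. fold c.
  apply (Rmult_eq_reg_r (/ h0)). 2: apply Rinv_neq_0_compat; lra.
  rewrite <- cQ. field. lra.
Qed.

End F.
Lemma lin_int (f : R -> R) s a b : a <= b ->
  (forall t, a <= t <= b -> continuous f t) ->
  RInt (fun t => s * t - f t) a b = s * (b^2 - a^2) / 2 - RInt f a b.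
Proof.
  intros Hab Hc.
  assert (Hl : is_RInt (fun t => s * t) a b (s * (b^2 - a^2) / 2)).
  { replace (s * (b^2 - a^2) / 2) with (minus (s * b^2 / 2) (s * a^2 / 2))
      by (unfold minus, plus, opp; simpl; field).
    apply (is_RInt_derive (fun t => s * t^2 / 2) (fun t => s * t)).
    - intros x _. auto_derive; auto. field.
    - intros x _. apply (ex_derive_continuous (fun t => s * t)). auto_derive; auto. }
  assert (Ef : ex_RInt f a b).
  { apply (ex_RInt_continuous (V:=R_CompleteNormedModule)). intros z Hz.
    rewrite Rmin_left in Hz by lra. rewrite Rmax_right in Hz by lra. apply Hc; auto. }
  rewrite (RInt_minus (V:=R_CompleteNormedModule) (fun t => s * t) f).
  - rewrite (is_RInt_unique _ _ _ _ Hl). reflexivity.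
  - eexists; exact Hl.
  - exact Ef.
Qed.

Lemma C3_Hder (f : R -> R) d : C3_on f d -> forall y, -d < y < d ->
  is_derive f y (Derive f y) /\ is_derive (Derive f) y (Derive_n f 2 y) /\ continuous (Derive_n f 2) y.
Proof.
  intros H y Hy. destruct (H y Hy) as [H1 [H2 [H3 H4]]].
  split; [apply Derive_correct; auto|]. split.
  - apply Derive_correct in H2. exact H2.
  - apply (ex_derive_continuous (Derive_n f 2)). exact H3.
Qed.

Theorem lemma7 (f g : R -> R) (d : R) :
  0 < d ->
  C3_on f d ->
  f 0 = 0 -> Derive f 0 = 0 ->
  (forall t, -d < t < d -> 0 < Derive_n f 2 t) ->
  condC_graph f d ->
  g 0 = 0 ->
  (forall x, -d < x < d -> x <> 0 ->
     Rabs (g x) < Rabs x /\ 0 <= g x * x /\ x * Derive f (g x) = f x) ->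
  exists eps, 0 < eps /\
    forall x, Rabs x < eps ->
      x ^ 3 * Derive_n f 2 (g x) = 8 * (f x * g x - x * f (g x)) /\
      x * f x = 4 / 3 * (f x * g x - x * f (g x)) + 2 * RInt f 0 x.
Proof.
  intros Hd HC3 F0 DF0 Hpos2 HC G0 Hg.
  pose proof (C3_Hder f d HC3) as Hder.
  assert (HC' : forall a b p, -d < a -> a < b -> b < d -> -d < p < d ->
    Derive f p = (f b - f a) / (b - a) ->
    segment_area f a b = 4 / 3 * triangle_area f a b p).
  { intros a b p Ha Hab Hb Hp E. apply HC; auto. }
  assert (Fc : forall t, -d < t < d -> continuous f t).
  { intros t Ht. apply (ex_derive_continuous f). eexists. apply (Hder t Ht). }
  exists d. split; auto. intros x Hx.
  pose proof Hx as Hx0. apply Rabs_def2 in Hx.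
  destruct (Req_dec x 0) as [X0|X0].
  { subst x. rewrite G0, F0. replace (RInt f 0 0) with 0 by (rewrite RInt_point; reflexivity). split; ring. }
  destruct (Hg x ltac:(lra) X0) as [Hg1 [Hg2 Hg3]].
  set (p := g x) in *.
  set (s := Derive f p) in *.
  assert (Hp : -d < p < d).
  { assert (Rabs p < d) by lra. apply Rabs_def2 in H. lra. }
  assert (P0 : p <> 0).
  { intros E.
    assert (0 < psi f (Derive f) 0 x).
    { apply (psi_pos f (Derive f) (Derive_n f 2) d Hder Hpos2); lra. }
    unfold psi in H. rewrite DF0, F0 in H.
    assert (s = 0) by (unfold s; rewrite E; exact DF0).
    rewrite H0 in Hg3. lra. }
  assert (Ps0 : 0 < psi f (Derive f) p 0).
  { apply (psi_pos f (Derive f) (Derive_n f 2) d Hder Hpos2); lra. }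
  assert (Psx : psi f (Derive f) p x = psi f (Derive f) p 0).
  { unfold psi. fold s. rewrite F0. rewrite <- Hg3. ring. }
  set (h0 := psi f (Derive f) p 0) in *.
  assert (Eh0 : f x * p - x * f p = x * h0).
  { unfold h0, psi. fold s. rewrite F0, <- Hg3. ring. }
  rewrite Eh0.
  destruct (Rlt_le_dec 0 x) as [Xp|Xn].
  - assert (Hp' : 0 < p < x).
    { rewrite (Rabs_right x) in Hg1 by lra.
      destruct (Rcase_abs p) as [Z|Z]; [nra|]. rewrite (Rabs_right p) in Hg1 by lra. lra. }
    split.
    + assert (Par := parabola f (Derive f) (Derive_n f 2) d Hder Hpos2 HC' p 0 x h0
                     ltac:(lra) ltac:(lra) ltac:(lra) ltac:(lra) eq_refl Psx).
      replace (x ^ 3 * Derive_n f 2 p) with (x * ((x - 0) ^ 2 * Derive_n f 2 p)) by ring.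
      rewrite Par. ring.
    + assert (S := HC' 0 x p ltac:(lra) Xp ltac:(lra) Hp).
      assert (Sl : s = (f x - f 0) / (x - 0)).
      { rewrite F0, <- Hg3. field. lra. }
      specialize (S Sl).
      unfold segment_area, triangle_area in S.
      assert (RE : RInt (fun t => chord f 0 x t - f t) 0 x = RInt (fun t => s * t - f t) 0 x).
      { apply (RInt_ext (V:=R_CompleteNormedModule)). intros t _. unfold chord.
        rewrite <- Sl, F0. simpl. ring. }
      rewrite RE, lin_int in S; [| lra | intros t Ht; apply Fc; lra].
      replace ((x - 0) * (f p - f 0) - (p - 0) * (f x - f 0)) with (- (x * h0)) in S
        by (rewrite F0; rewrite <- Eh0; ring).
      rewrite Rabs_Ropp, Rabs_right in S by nra.
      assert (s * x = f x) by (rewrite <- Hg3; ring).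
      replace (s * (x ^ 2 - 0 ^ 2) / 2) with (x * f x / 2) in S by (rewrite <- H; field).
      lra.
  - assert (Xn' : x < 0) by lra.
    assert (Hp' : x < p < 0).
    { rewrite (Rabs_left x) in Hg1 by lra.
      destruct (Rcase_abs p) as [Z|Z]; [|nra]. rewrite (Rabs_left p) in Hg1 by lra. lra. }
    split.
    + assert (Par := parabola f (Derive f) (Derive_n f 2) d Hder Hpos2 HC' p x 0 h0
                     ltac:(lra) ltac:(lra) ltac:(lra) ltac:(lra) Psx eq_refl).
      replace (x ^ 3 * Derive_n f 2 p) with (x * ((0 - x) ^ 2 * Derive_n f 2 p)) by ring.
      rewrite Par. ring.
    + assert (S := HC' x 0 p ltac:(lra) Xn' ltac:(lra) Hp).
      assert (Sl : s = (f 0 - f x) / (0 - x)).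
      { rewrite F0, <- Hg3. field. lra. }
      specialize (S Sl).
      unfold segment_area, triangle_area in S.
      assert (sx : s * x = f x) by (rewrite <- Hg3; ring).
      assert (RE : RInt (fun t => chord f x 0 t - f t) x 0 = RInt (fun t => s * t - f t) x 0).
      { apply (RInt_ext (V:=R_CompleteNormedModule)). intros t _. unfold chord.
        rewrite <- Sl. rewrite <- sx. simpl. ring. }
      rewrite RE, lin_int in S; [| lra | intros t Ht; apply Fc; lra].
      assert (Sw : RInt f x 0 = - RInt f 0 x).
      { rewrite <- (opp_RInt_swap (V:=R_CompleteNormedModule) f 0 x). reflexivity.
        apply (ex_RInt_continuous (V:=R_CompleteNormedModule)). intros z Hz.
        apply Fc. rewrite Rmin_right in Hz by lra. rewrite Rmax_left in Hz by lra. lra. }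
      rewrite Sw in S.
      replace ((0 - x) * (f p - f x) - (p - x) * (f 0 - f x)) with (x * h0) in S
        by (rewrite F0; rewrite <- Eh0; ring).
      rewrite Rabs_left in S by nra.
      replace (s * (0 ^ 2 - x ^ 2) / 2) with (- (x * f x) / 2) in S by (rewrite <- sx; field).
      lra.
Qed.
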